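(* Let $G=(m,n,\boldsymbol{c},\boldsymbol{d},r_{\max},r_{\min})$ be an interbank lending game, let $g(\boldsymbol{s})=(\nabla_1u_1(\boldsymbol{s}),\dots,\nabla_mu_m(\boldsymbol{s}))\in\mathbb{R}^{mn}$ be its $\boldsymbol{1}$-pseudo-gradient, and let $\nabla g(\boldsymbol{s})$ be the $mn\times mn$ Jacobian matrix of $g$ at $\boldsymbol{s}$. Then for every strategy profile $\boldsymbol{s}$, the matrix $\nabla g(\boldsymbol{s})+(\nabla g(\boldsymbol{s}))^\top$ is negative definite.
   Context: An interbank lending game $G=(m,n,\boldsymbol{c},\boldsymbol{d},r_{\max},r_{\min})$ consists of positive integers $m,n$, budgets $\boldsymbol{c}\in\mathbb{R}_{>0}^m$, demands $\boldsymbol{d}\in\mathbb{R}_{>0}^n$ and reals $0<r_{\min}<r_{\max}$. Lenders are $L=\{1,\dots,m\}$, borrowers $B=\{1,\dots,n\}$. Lender $i$'s strategy set is $S_i=\{s_i\in\mathbb{R}_{\ge0}^n:\sum_{j\in B}s_{ij}\le c_i\}$, the strategy space is $\boldsymbol{S}=\prod_{i\in L}S_i$ with elements $\boldsymbol{s}=(s_{ij})_{i\in L,j\in B}$, $s_i=(s_{i1},\dots,s_{in})$. The interest rate of borrower $j$ is $r_j(\boldsymbol{s})=(r_{\min}-r_{\max})\frac{\sum_{i\in L}s_{ij}}{d_j}+r_{\max}$ and lender $i$'s utility is $u_i(\boldsymbol{s})=\sum_{j\in B}(r_j(\boldsymbol{s})-r_{\min})s_{ij}$ (a polynomial in $\boldsymbol{s}$).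 $\nabla_iu_i(\boldsymbol{s})\in\mathbb{R}^n$ denotes the gradient of $u_i$ with respect to lender $i$'s own variables $s_i$. *)

(* Defs.v *)
From HB Require Import structures.
From mathcomp Require Import all_boot all_order all_algebra.
From mathcomp Require Import all_classical all_reals all_analysis.
Set Implicit Arguments. Unset Strict Implicit. Unset Printing Implicit Defensive.
Import Order.TTheory GRing.Theory Num.Theory.
Import numFieldNormedType.Exports.
Local Open Scope ring_scope.

Section IBLG.
Variables (R : realType) (m n : nat).
Variables (c : 'I_m -> R) (d : 'I_n -> R) (rmax rmin : R).

Definition strategy_profile (s : 'M[R]_(m, n)) : Prop :=
  forall i : 'I_m, (forall j : 'I_n, 0 <= s i j) /\ \sum_(j < n) s i j <= c i.

Definition rate (j : 'I_n) (s : 'M[R]_(m, n)) : R :=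
  (rmin - rmax) * (\sum_(i < m) s i j) / d j + rmax.

Definition utility (i : 'I_m) (s : 'M[R]_(m, n)) : R :=
  \sum_(j < n) (rate j s - rmin) * s i j.

(* 1-pseudo-gradient, arranged as an m x n matrix: entry (i,j) is
   the partial derivative of u_i w.r.t. s_{ij}. *)
Definition pseudo_gradient (s : 'M[R]_(m, n)) : 'M[R]_(m, n) :=
  \matrix_(i, j) ('D_(delta_mx i j) (utility i) s).

(* Jacobian of g, as an (m*n) x (m*n) matrix, in the flattening mxvec
   (row-major: block i lists the n coordinates of lender i). *)
Definition pseudo_gradient_jacobian (s : 'M[R]_(m, n)) : 'M[R]_(m * n) :=
  \matrix_(p, q)
    ('D_(vec_mx (delta_mx 0 q) : 'M[R]_(m, n))
        (fun t : 'M[R]_(m, n) => mxvec (pseudo_gradient t) 0 p) s).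
End IBLG.

Definition negative_definite (R : realType) (N : nat) (A : 'M[R]_N) : Prop :=
  forall x : 'cV[R]_N, x != 0 -> (x^T *m A *m x) 0 0 < 0.

(* Main.v *)
Require Import Defs.
From HB Require Import structures.
From mathcomp Require Import all_boot all_order all_algebra.
From mathcomp Require Import all_classical all_reals all_analysis.
Import Order.TTheory GRing.Theory Num.Theory.
Import numFieldNormedType.Exports.
Local Open Scope ring_scope.


Local Open Scope classical_set_scope.
Lemma D_affine (R : realType) (V : normedModType R) (f : V -> R) a v (A B : R) :
 (forall h : R, h != 0 -> h^-1 *: (f (h *: v + a) - f a) = A + h * B) -> 'D_v f a = A.
Proof.
move=> H; rewrite /derive; apply: cvg_lim => //.
have HA : (fun h : R => A + h * B) x @[x --> (0:R)^'] --> A.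
  rewrite -[X in _ --> X]addr0; apply: cvgD; first exact: cvg_cst.
  rewrite -[X in _ --> X](mul0r B); apply: cvgMr_tmp.
  exact: cvg_within_filter (@cvg_id _ (nbhs (0:R))).
apply: cvg_trans HA; apply: near_eq_cvg; near=> h.
rewrite /= /shift H //. near: h; exact: nbhs_dnbhs_neq.
Unshelve. all: by end_near.
Qed.
Local Close Scope classical_set_scope.
From mathcomp Require Import ring lra.

Section S.
Variables (R : realType) (m n : nat) (d : 'I_n -> R) (rmax rmin : R).
Hypothesis hd : forall j, d j != 0.
Let k := rmin - rmax.
Definition Sj (t : 'M[R]_(m, n)) j := \sum_(i < m) t i j.
Definition G i (t v : 'M[R]_(m, n)) :=
  \sum_(j < n) ((k * Sj t j / d j + (rmax - rmin)) * v i j + k * Sj v j / d j * t i j).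
Definition Q i (v : 'M[R]_(m, n)) := \sum_(j < n) k * Sj v j / d j * v i j.
Definition G2 i (w v : 'M[R]_(m, n)) :=
  \sum_(j < n) (k * Sj w j / d j * v i j + k * Sj v j / d j * w i j).

Lemma SjD h v a j : Sj (h *: v + a) j = h * Sj v j + Sj a j.
Proof.
rewrite /Sj mulr_sumr -big_split; apply: eq_bigr => i _; by rewrite !mxE.
Qed.

Lemma util_diff i a v h : utility d rmax rmin i (h *: v + a) - utility d rmax rmin i a
  = h * G i a v + h ^+ 2 * Q i v.
Proof.
rewrite /utility /G /Q -sumrB !mulr_sumr -big_split; apply: eq_bigr => j _ /=.
rewrite /rate -/(Sj _ j) -/(Sj _ j) SjD !mxE /k.
have := hd j; move=> hj. by field.
Qed.

Lemma D_util i a v : 'D_v (utility d rmax rmin i) a = G i a v.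
Proof.
apply: (@D_affine _ _ _ _ _ _ (Q i v)) => h hh.
rewrite util_diff /GRing.scale /=. by field.
Qed.

Lemma G_diff i a w v h : G i (h *: w + a) v - G i a v = h * G2 i w v.
Proof.
rewrite /G /G2 -sumrB !mulr_sumr; apply: eq_bigr => j _ /=.
rewrite SjD !mxE /k. have := hd j; move=> hj. by field.
Qed.

Lemma J_entry a i j w :
  pseudo_gradient_jacobian d rmax rmin a (mxvec_index i j) w
  = G2 i (vec_mx (delta_mx 0 w)) (delta_mx i j).
Proof.
rewrite /pseudo_gradient_jacobian mxE.
rewrite (_ : (fun t => _) = fun t => G i t (delta_mx i j)); last first.
  by apply: funext => t; rewrite mxvecE mxE D_util.
apply: (@D_affine _ _ _ _ _ _ 0) => h hh.
by rewrite G_diff /GRing.scale /= mulr0 addr0 mulrA mulVf // mul1r.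
Qed.
Lemma sum_mxvec (F : 'I_(m*n) -> R) :
  \sum_p F p = \sum_(i < m) \sum_(j < n) F (mxvec_index i j).
Proof.
rewrite (reindex _ (curry_mxvec_bij _ _)) /= pair_bigA /=.
by apply: eq_bigr => [[i j]].
Qed.

Lemma Sj_delta a b l : Sj (delta_mx a b : 'M[R]_(m, n)) l = (b == l)%:R.
Proof.
rewrite /Sj (bigD1 a) //= big1 ?addr0 => [|i /negPf ne]; rewrite mxE ?ne //.
by rewrite eqxx /= eq_sym.
Qed.

Lemma J_closed (a : 'M[R]_(m, n)) (i i' : 'I_m) (j j' : 'I_n) :
  pseudo_gradient_jacobian d rmax rmin a (mxvec_index i j) (mxvec_index i' j')
  = k / d j * ((j' == j)%:R * (1 + (i' == i)%:R)).
Proof.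
rewrite J_entry (@vec_mx_delta R m n i' j') /G2. rewrite (bigD1 j) //= big1 ?addr0 => [|l /negPf ne]; last first.
  by rewrite !Sj_delta !mxE ne (eq_sym j l) ne !andbF /= mulr0 mulr0 !mul0r addr0.
rewrite !Sj_delta !mxE !eqxx /=.
have [ej|nj] := eqVneq j' j; have [ei|ni] := eqVneq i' i; try subst j'; try subst i';
  rewrite ?eqxx ?andbT ?andbF ?(eq_sym j j') ?(negPf nj) ?(eq_sym i i') ?(negPf ni) /=; ring.
Qed.
End S.
Lemma inner_sum (R : realType) m n (X : 'I_m -> 'I_n -> R) (c : 'I_n -> R) i' j' :
  \sum_(i < m) \sum_(j < n) X i j * (c j * ((j' == j)%:R * (1 + (i' == i)%:R))
        + c j' * ((j == j')%:R * (1 + (i == i')%:R)))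
  = 2 * c j' * (\sum_(i < m) X i j' + X i' j').
Proof.
transitivity (\sum_(i < m) (2 * c j' * X i j' + 2 * c j' * X i j' * (i == i')%:R)).
  apply: eq_bigr => i _.
  rewrite (bigD1 j') //= big1 ?addr0 => [|j nj]; last first.
    by rewrite (negPf nj) eq_sym (negPf nj) /= !mul0r !mulr0 addr0 mulr0.
  by rewrite eqxx (eq_sym i' i) /=; ring.
rewrite big_split /= -mulr_sumr [X in _ + X](bigD1 i') //= [X in _ + (_ + X)]big1 ?addr0 => [|i ni]; last first.
  by rewrite (negPf ni) mulr0.
by rewrite eqxx /=; ring.
Qed.

Lemma quad_neg (R : realType) m n (X : 'I_m -> 'I_n -> R) (c : 'I_n -> R)
  (hc : forall j, c j < 0) i0 j0 (hX : X i0 j0 != 0) :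
  \sum_(i' < m) \sum_(j' < n) (2 * c j' * (\sum_(i < m) X i j' + X i' j')) * X i' j' < 0.
Proof.
rewrite exchange_big /=.
have E : forall j', \sum_(i' < m) (2 * c j' * (\sum_(i < m) X i j' + X i' j')) * X i' j'
   = 2 * c j' * ((\sum_(i < m) X i j') ^+ 2 + \sum_(i < m) X i j' ^+ 2).
  move=> j'; set S := \sum_(i < m) X i j'.
  transitivity (\sum_(i' < m) (2 * c j' * (S * X i' j') + 2 * c j' * X i' j' ^+ 2)).
    by apply: eq_bigr => i _; ring.
  by rewrite big_split /= -!mulr_sumr -/S; ring.
rewrite (eq_bigr _ (fun j _ => E j)) (bigD1 j0) //=.
have Hle : \sum_(j < n | j != j0) 2 * c j * ((\sum_(i < m) X i j) ^+ 2 + \sum_(i < m) X i j ^+ 2) <= 0.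
  apply: sumr_le0 => j _.
  have hY : 0 <= (\sum_(i < m) X i j) ^+ 2 + \sum_(i < m) X i j ^+ 2.
    by rewrite addr_ge0 ?sqr_ge0 // sumr_ge0 // => i _; rewrite sqr_ge0.
  have := hc j; nra.
have Hlt : 0 < (\sum_(i < m) X i j0) ^+ 2 + \sum_(i < m) X i j0 ^+ 2.
  apply: ltr_wpDl; first exact: sqr_ge0.
  rewrite (bigD1 i0) //=; apply: ltr_wpDr; first by apply: sumr_ge0 => i _; exact: sqr_ge0.
  by rewrite exprn_even_gt0.
have := hc j0; nra.
Qed.

Theorem proposition4p7 (R : realType) (m n : nat) (c : 'I_m -> R) (d : 'I_n -> R)
  (rmax rmin : R) (m_pos : (0 < m)%N) (n_pos : (0 < n)%N)
  (c_pos : forall i, 0 < c i) (d_pos : forall j, 0 < d j)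
  (rmin_pos : 0 < rmin) (rmin_lt_rmax : rmin < rmax)
  (s : 'M[R]_(m, n)) (hs : strategy_profile c s) :
  negative_definite
    (pseudo_gradient_jacobian d rmax rmin s
     + (pseudo_gradient_jacobian d rmax rmin s)^T).
Proof.
move=> x xn0.
have hd : forall j, d j != 0 by move=> j; rewrite lt0r_neq0.
have [p xp] : exists p, x p 0 != 0.
  case: (pselect (exists p, x p 0 != 0)) => // H; exfalso.
  move/eqP: xn0; apply; apply/matrixP => p q; rewrite ord1 mxE.
  apply/eqP; apply/negP => hp; apply: H; exists p; exact/negP.
move: xp; case/mxvec_indexP: p => i0 j0 xp.
pose X := fun i j => x (mxvec_index i j) 0.
have hc : forall j, (rmin - rmax) / d j < 0.
  move=> j; rewrite pmulr_llt0 ?invr_gt0 ?d_pos //; lra.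
have Hq := @quad_neg R m n X (fun j => (rmin - rmax) / d j) hc i0 j0 xp.
move: Hq; apply: le_lt_trans; rewrite le_eqVlt; apply/orP; left; apply/eqP.
rewrite mxE sum_mxvec; apply: eq_bigr => i' _; apply: eq_bigr => j' _.
rewrite mxE sum_mxvec -(@inner_sum R m n X (fun j => (rmin - rmax) / d j) i' j'); congr (_ * _).
apply: eq_bigr => i _; apply: eq_bigr => j _.
by rewrite [x^T _ _]mxE [in X in _ * X]mxE (@J_closed R m n d rmax rmin hd) /trmx mxE (@J_closed R m n d rmax rmin hd).
Qed.
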